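(* Let $\Theta$ be an S4K-logic characterised by a class $\mathcal C$ of general S4K-frames (i.e. $\chi\in\Theta$ iff every $\mathfrak F\in\mathcal C$ validates $\chi$). Then the iA-logic $\rho\Theta=\{\varphi\in\mathcal L_{\multimap}\mid t(\varphi)\in\Theta\}$ is characterised by the class $\hat\rho\mathcal C=\{\hat\rho\mathfrak F\mid\mathfrak F\in\mathcal C\}$ of general $\multimap$-frames.
   Context: $\mathcal L_{i,m}$: classical bimodal language with $\Box_i,\Box_m$. An S4K-logic is a set of $\mathcal L_{i,m}$-formulae containing all classical tautologies, the $\mathsf K$ axioms for $\Box_i$ and $\Box_m$, and $\Box_ip\to p$, $\Box_ip\to\Box_i\Box_ip$, closed under modus ponens, necessitation for both boxes and uniform substitution. The translation $t:\mathcal L_{\multimap}\to\mathcal L_{i,m}$: $t(p)=\Box_ip$, $t(\top)=\top$, $t(\bot)=\bot$, $t(\varphi\star\psi)=\Box_i(t\varphi\star t\psi)$ for $\star\in\{\wedge,\vee,\to\}$, $t(\varphi\multimap\psi)=\Box_i\Box_m(t\varphi\to t\psi)$. General S4K-frames $(X,R_i,R_m,P)$: $R_i$ preorder, $P$ a Boolean subalgebra of $\mathcal P(X)$ closed under $[i]$ and $[m]$ (universal modalities along $R_i$, $R_m$); validity uses valuations into $P$. $\hat\rho\mathfrak F:=([X],[R_i],[R_m^*],\hat\rho P)$ where $xR_m^*z$ iff $\exists y(xR_iy\wedge yR_mz)$; $[x]$ is the class of $x$ under $x\sim y\iff xR_iy\wedge yR_ix$; $[x][R_i][y]$ iff $xR_iy$;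 $[x][R_m^*][y]$ iff $xR_m^*y'$ for some $y'\sim y$; $\hat\rho P=\{\{[x]\mid x\in[i]b\}\mid b\in P\}$. Validity in a general $\multimap$-frame $(Y,\preceq,\sqsubset,Q)$: under all valuations into $Q$ the truth set is $Y$, with $\to$ interpreted along $\preceq$ and $\multimap$ along $\sqsubset$ ($a\Rrightarrow b=\{x\mid\forall y(x\sqsubset y,y\in a\Rightarrow y\in b)\}$). *)

(* Defs.v *)
Inductive iform : Type :=
| IVar  : nat -> iform
| ITop  : iform
| IBot  : iform
| IAnd  : iform -> iform -> iform
| IOr   : iform -> iform -> iform
| IImp  : iform -> iform -> iform
| IStr  : iform -> iform -> iform.

Inductive mform : Type :=
| MVar  : nat -> mform
| MTop  : mform
| MBot  : mform
| MAnd  : mform -> mform -> mform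
| MOr   : mform -> mform -> mform
| MImp  : mform -> mform -> mform
| MBoxI : mform -> mform
| MBoxM : mform -> mform.

Fixpoint tr (f : iform) : mform :=
  match f with
  | IVar p => MBoxI (MVar p)
  | ITop => MTop
  | IBot => MBot
  | IAnd a b => MBoxI (MAnd (tr a) (tr b))
  | IOr a b => MBoxI (MOr (tr a) (tr b))
  | IImp a b => MBoxI (MImp (tr a) (tr b))
  | IStr a b => MBoxI (MBoxM (MImp (tr a) (tr b)))
  end.

Fixpoint beval (v : mform -> bool) (f : mform) : bool :=
  match f with
  | MVar _ => v f
  | MTop => true
  | MBot => false
  | MAnd a b => andb (beval v a) (beval v b)
  | MOr a b => orb (beval v a) (beval v b)
  | MImp a b => orb (negb (beval v a)) (beval v b)
  | MBoxI _ => v f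
  | MBoxM _ => v f
  end.

Definition tautology (f : mform) : Prop := forall v, beval v f = true.

Fixpoint msubst (s : nat -> mform) (f : mform) : mform :=
  match f with
  | MVar p => s p
  | MTop => MTop
  | MBot => MBot
  | MAnd a b => MAnd (msubst s a) (msubst s b)
  | MOr a b => MOr (msubst s a) (msubst s b)
  | MImp a b => MImp (msubst s a) (msubst s b)
  | MBoxI a => MBoxI (msubst s a)
  | MBoxM a => MBoxM (msubst s a)
  end.

Definition is_S4K_logic (L : mform -> Prop) : Prop :=
  (forall f, tautology f -> L f) /\
  (forall a b, L (MImp (MBoxI (MImp a b)) (MImp (MBoxI a) (MBoxI b)))) /\
  (forall a b, L (MImp (MBoxM (MImp a b)) (MImp (MBoxM a) (MBoxM b)))) /\
  (L (MImp (MBoxI (MVar 0)) (MVar 0))) /\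
  (L (MImp (MBoxI (MVar 0)) (MBoxI (MBoxI (MVar 0))))) /\
  (forall a b, L a -> L (MImp a b) -> L b) /\
  (forall a, L a -> L (MBoxI a)) /\
  (forall a, L a -> L (MBoxM a)) /\
  (forall s a, L a -> L (msubst s a)).

Definition boxset {X : Type} (R : X -> X -> Prop) (A : X -> Prop) : X -> Prop :=
  fun x => forall y, R x y -> A y.

Record GFrame : Type := {
  gX  : Type;
  gRi : gX -> gX -> Prop;
  gRm : gX -> gX -> Prop;
  gP  : (gX -> Prop) -> Prop;
  gRi_refl  : forall x, gRi x x;
  gRi_trans : forall x y z, gRi x y -> gRi y z -> gRi x z;
  gP_empty : gP (fun _ => False);
  gP_full  : gP (fun _ => True);
  gP_compl : forall A, gP A -> gP (fun x => ~ A x);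
  gP_inter : forall A B, gP A -> gP B -> gP (fun x => A x /\ B x);
  gP_union : forall A B, gP A -> gP B -> gP (fun x => A x \/ B x);
  gP_boxi  : forall A, gP A -> gP (boxset gRi A);
  gP_boxm  : forall A, gP A -> gP (boxset gRm A)
}.

Fixpoint gsat (F : GFrame) (V : nat -> gX F -> Prop) (x : gX F) (f : mform) : Prop :=
  match f with
  | MVar p => V p x
  | MTop => True
  | MBot => False
  | MAnd a b => gsat F V x a /\ gsat F V x b
  | MOr a b => gsat F V x a \/ gsat F V x b
  | MImp a b => gsat F V x a -> gsat F V x b
  | MBoxI a => forall y, gRi F x y -> gsat F V y a
  | MBoxM a => forall y, gRm F x y -> gsat F V y a
  end.

Definition gvalid (F : GFrame) (f : mform) : Prop :=
  forall V : nat -> gX F -> Prop, (forall p, gP F (V p)) -> forall x, gsat F V x f.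

Record MFrame : Type := {
  mY  : Type;
  mle : mY -> mY -> Prop;
  msq : mY -> mY -> Prop;
  mQ  : (mY -> Prop) -> Prop
}.

Fixpoint msat (G : MFrame) (V : nat -> mY G -> Prop) (x : mY G) (f : iform) : Prop :=
  match f with
  | IVar p => V p x
  | ITop => True
  | IBot => False
  | IAnd a b => msat G V x a /\ msat G V x b
  | IOr a b => msat G V x a \/ msat G V x b
  | IImp a b => forall y, mle G x y -> msat G V y a -> msat G V y b
  | IStr a b => forall y, msq G x y -> msat G V y a -> msat G V y b
  end.

Definition mvalid (G : MFrame) (f : iform) : Prop :=
  forall V : nat -> mY G -> Prop, (forall p, mQ G (V p)) -> forall x, msat G V x f.

Section RhoHat.
Variable F : GFrame.

Definition req (x y : gX F) : Prop := gRi F x y /\ gRi F y x.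
Definition cls (x : gX F) : gX F -> Prop := fun y => req x y.
Definition RmStar (x z : gX F) : Prop := exists y, gRi F x y /\ gRm F y z.

Definition Cls : Type := { c : gX F -> Prop | exists x, c = cls x }.

Definition cls_le (c d : Cls) : Prop :=
  exists x y, proj1_sig c = cls x /\ proj1_sig d = cls y /\ gRi F x y.

Definition cls_sq (c d : Cls) : Prop :=
  exists x y, proj1_sig c = cls x /\ proj1_sig d = cls y /\
    exists y', req y' y /\ RmStar x y'.

Definition cls_Q (A : Cls -> Prop) : Prop :=
  exists b, gP F b /\
    forall c : Cls, A c <-> exists x, proj1_sig c = cls x /\ boxset (gRi F) b x.
End RhoHat.

Definition rho_hat (F : GFrame) : MFrame :=
  {| mY := Cls F; mle := cls_le F; msq := cls_sq F; mQ := cls_Q F |}.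

Definition rho (L : mform -> Prop) : iform -> Prop := fun f => L (tr f).

(* Main.v *)
Require Import Defs.
From Stdlib Require Import FunctionalExtensionality PropExtensionality.

Lemma cls_eq_req (F : GFrame) x y : cls F x = cls F y -> req F x y.
Proof.
  intro H. assert (H1 : cls F y y) by (split; apply gRi_refl).
  rewrite <- H in H1. exact H1.
Qed.

Lemma persist (F : GFrame) W phi x y :
  gsat F W x (tr phi) -> gRi F x y -> gsat F W y (tr phi).
Proof.
  destruct phi; simpl; intros H R; auto;
  intros z Rz; apply H; eapply gRi_trans; eauto.
Qed.

Definition mk (F : GFrame) (x : gX F) : Cls F :=
  exist _ (cls F x) (ex_intro _ x eq_refl).

Lemma main F (W : nat -> gX F -> Prop) (V : nat -> Cls F -> Prop)
  (HV : forall p c, V p c <-> exists x, proj1_sig c = cls F x /\ boxset (gRi F) (W p) x) :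
  forall phi c x, proj1_sig c = cls F x ->
    (gsat F W x (tr phi) <-> msat (rho_hat F) V c phi).
Proof.
  induction phi; intros c x Hc; simpl.
  - rewrite HV. split.
    + intro H. exists x. split; auto.
    + intros [x' [Hx' Hb]]. rewrite Hc in Hx'. apply cls_eq_req in Hx'.
      destruct Hx' as [R1 R2]. intros y Ry. apply Hb. eapply gRi_trans; eauto.
  - tauto.
  - tauto.
  - split.
    + intro H. destruct (H x (gRi_refl F x)) as [H1 H2].
      split; [apply (IHphi1 c x Hc) | apply (IHphi2 c x Hc)]; auto.
    + intros [H1 H2] y Ry. split; eapply persist; eauto;
      [apply (IHphi1 c x Hc) | apply (IHphi2 c x Hc)]; auto.
  - split.
    + intro H. destruct (H x (gRi_refl F x)) as [H1|H2];
      [left; apply (IHphi1 c x Hc) | right; apply (IHphi2 c x Hc)]; auto.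
    + intros [H1|H2] y Ry; [left|right]; eapply persist; eauto;
      [apply (IHphi1 c x Hc) | apply (IHphi2 c x Hc)]; auto.
  - split.
    + intros H d [x1 [y1 [E1 [E2 R]]]] Ha.
      rewrite Hc in E1. apply cls_eq_req in E1. destruct E1 as [R1 R2].
      apply (IHphi2 d y1 E2). apply H.
      * eapply gRi_trans; eauto.
      * apply (IHphi1 d y1 E2); auto.
    + intros H y Ry Ha.
      apply (IHphi2 (mk F y) y eq_refl). apply H.
      * exists x, y. repeat split; auto.
      * apply (IHphi1 (mk F y) y eq_refl); auto.
  - split.
    + intros H d [x1 [y1 [E1 [E2 [y' [[Q1 Q2] [w [Rw Rm]]]]]]]] Ha.
      rewrite Hc in E1. apply cls_eq_req in E1. destruct E1 as [R1 R2].
      apply (IHphi2 d y1 E2).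
      apply (IHphi1 d y1 E2) in Ha.
      eapply persist; [|exact Q1].
      apply (H w); [eapply gRi_trans; eauto | exact Rm |].
      eapply persist; eauto.
    + intros H y Ry z Rz Ha.
      apply (IHphi2 (mk F z) z eq_refl). apply H.
      * exists x, z. repeat split; auto.
        exists z. split; [split; apply gRi_refl|]. exists y; auto.
      * apply (IHphi1 (mk F z) z eq_refl); auto.
Qed.

Lemma equiv F phi : gvalid F (tr phi) <-> mvalid (rho_hat F) phi.
Proof.
  split.
  - intros H V HQ c.
    set (W := fun p x => V p (mk F x)).
    assert (HPW : forall p, gP F (W p)).
    { intro p. destruct (HQ p) as [b [Hb Hiff]].
      assert (E : W p = boxset (gRi F) b).
      { apply functional_extensionality. intro z. apply propositional_extensionality.
        unfold W. rewrite Hiff. split.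
        - intros [z' [Ez Hz']]. simpl in Ez. apply cls_eq_req in Ez.
          destruct Ez as [R1 R2]. intros u Ru. apply Hz'.
          eapply gRi_trans; eauto.
        - intro Hz'. exists z. split; auto. }
      rewrite E. apply gP_boxi, Hb. }
    destruct c as [c [x Ex]].
    assert (HV : forall p c, V p c <-> exists x, proj1_sig c = cls F x /\ boxset (gRi F) (W p) x).
    { intros p [c' [x' Ex']]. destruct (HQ p) as [b [Hb Hiff]].
      rewrite Hiff. simpl. split.
      - intros [z [Ez Hz]]. exists z. split; auto.
        intros u Ru. unfold W. apply Hiff. exists u. split; auto.
        intros v Rv. apply Hz. eapply gRi_trans; eauto.
      - intros [z [Ez Hz]]. exists z. split; auto.
        intros u Ru. specialize (Hz u Ru). unfold W in Hz. apply Hiff in Hz.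
        destruct Hz as [u' [Eu Hu]]. simpl in Eu. apply cls_eq_req in Eu.
        destruct Eu as [R1 R2]. apply Hu. exact R2. }
    apply (main F W V HV phi (exist _ c (ex_intro _ x Ex)) x Ex). apply H. exact HPW.
  - intros H W HP x.
    set (V := fun p (c : Cls F) => exists x, proj1_sig c = cls F x /\ boxset (gRi F) (W p) x).
    apply (main F W V (fun p c => iff_refl _) phi (mk F x) x eq_refl).
    apply H. intro p. exists (W p). split; auto. intro c. apply iff_refl.
Qed.

Theorem proposition4p13 :
  forall (Theta : mform -> Prop) (C : GFrame -> Prop),
    is_S4K_logic Theta ->
    (forall chi, Theta chi <-> (forall F, C F -> gvalid F chi)) ->
    forall phi : iform,
      rho Theta phi <-> (forall F, C F -> mvalid (rho_hat F) phi).
Proof.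
  intros Theta C _ HC phi. unfold rho. rewrite HC.
  split; intros H F HF; apply equiv; auto.
Qed.
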